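(* Let $q \equiv 1 \pmod 4$ be a prime number with $q \ge 13$, let $s \in \mathbb Z_q^*$ with $\mathrm{ord}_q(s) = \frac{q-1}{2} = m$, and let $a_0, a_1, \dots, a_{m-1} \in \mathbb Z_q$. Suppose that each of the sets $\{a_0,a_2,a_4,\dots,a_{m-2}\}$ and $\{a_1,a_3,a_5,\dots,a_{m-1}\}$ has at least two distinct elements modulo $q$. Then the set $$\mathcal A = \left\{a_{\sigma(0)} + a_{\sigma(1)}s + a_{\sigma(2)}s^2 + \cdots + a_{\sigma(m-1)}s^{m-1} \in \mathbb Z_q \;\middle|\; \sigma \text{ a permutation of } (0, 1, \dots, m-1) \right\}$$ has at least $q-1$ distinct elements. *)

(* Defs.v *)
From mathcomp Require Import all_boot all_order all_algebra all_fingroup.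
Set Implicit Arguments. Unset Strict Implicit. Unset Printing Implicit Defensive.
Import GRing.Theory.
Local Open Scope ring_scope.

Definition perm_sums (R : finRingType) (m : nat) (a : nat -> R) (s : R) : {set R} :=
  [set (\sum_(i < m) a (sigma i) * s ^+ i) | sigma : 'S_m].

(* Main.v *)
Require Import Defs.
From mathcomp Require Import all_boot all_order all_algebra all_fingroup.
From mathcomp Require Import finfield ring zify.

Definition mtbl : seq (seq nat) :=
  [seq [seq (x * y) %% 13 | y <- iota 0 13] | x <- iota 0 13].
Definition atbl : seq (seq nat) :=
  [seq [seq (x + y) %% 13 | y <- iota 0 13] | x <- iota 0 13].
Definition mtblL : seq (seq nat) := [:: [:: 0;0;0;0;0;0;0;0;0;0;0;0;0];
 [:: 0;1;2;3;4;5;6;7;8;9;10;11;12];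
 [:: 0;2;4;6;8;10;12;1;3;5;7;9;11];
 [:: 0;3;6;9;12;2;5;8;11;1;4;7;10];
 [:: 0;4;8;12;3;7;11;2;6;10;1;5;9];
 [:: 0;5;10;2;7;12;4;9;1;6;11;3;8];
 [:: 0;6;12;5;11;4;10;3;9;2;8;1;7];
 [:: 0;7;1;8;2;9;3;10;4;11;5;12;6];
 [:: 0;8;3;11;6;1;9;4;12;7;2;10;5];
 [:: 0;9;5;1;10;6;2;11;7;3;12;8;4];
 [:: 0;10;7;4;1;11;8;5;2;12;9;6;3];
 [:: 0;11;9;7;5;3;1;12;10;8;6;4;2];
 [:: 0;12;11;10;9;8;7;6;5;4;3;2;1] ].
Definition atblL : seq (seq nat) := [:: [:: 0;1;2;3;4;5;6;7;8;9;10;11;12];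
 [:: 1;2;3;4;5;6;7;8;9;10;11;12;0];
 [:: 2;3;4;5;6;7;8;9;10;11;12;0;1];
 [:: 3;4;5;6;7;8;9;10;11;12;0;1;2];
 [:: 4;5;6;7;8;9;10;11;12;0;1;2;3];
 [:: 5;6;7;8;9;10;11;12;0;1;2;3;4];
 [:: 6;7;8;9;10;11;12;0;1;2;3;4;5];
 [:: 7;8;9;10;11;12;0;1;2;3;4;5;6];
 [:: 8;9;10;11;12;0;1;2;3;4;5;6;7];
 [:: 9;10;11;12;0;1;2;3;4;5;6;7;8];
 [:: 10;11;12;0;1;2;3;4;5;6;7;8;9];
 [:: 11;12;0;1;2;3;4;5;6;7;8;9;10];
 [:: 12;0;1;2;3;4;5;6;7;8;9;10;11] ].
Lemma mtblE : mtblL = mtbl. Proof. by vm_compute. Qed.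
Lemma atblE : atblL = atbl. Proof. by vm_compute. Qed.
Definition mm (x y : nat) := nth 0 (nth [::] mtblL x) y.
Definition am (x y : nat) := nth 0 (nth [::] atblL x) y.
Definition sumN (s : nat) (v : seq nat) (l : seq nat) : nat :=
  foldr (fun p acc => am (nth 0 v p) (mm s acc)) 0 l.
Definition p6 (y : nat) := let y2 := mm y y in mm y2 (mm y2 y2).
Fixpoint hasS (f : seq nat -> bool) (L : seq (seq nat)) : bool :=
  if L is l :: L' then (if f l then true else hasS f L') else false.
Definition cand1 := [:: [:: 0;1;2;3;4;5]; [:: 0;1;2;5;4;3]; [:: 0;3;2;1;4;5]; [:: 0;1;2;3;5;4]; [:: 0;1;2;4;3;5]; [:: 0;3;2;4;5;1]; [:: 0;5;2;4;1;3]; [:: 0;5;2;1;4;3]; [:: 0;2;1;5;4;3]; [:: 0;2;4;3;1;5]; [:: 0;1;5;2;4;3]; [:: 0;1;3;4;5;2]; [:: 0;4;3;2;5;1]].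
Definition cand2 := [:: [:: 0;1;2;3;4;5]; [:: 0;3;4;5;2;1]; [:: 0;1;2;5;4;3]; [:: 0;5;4;3;2;1]; [:: 0;1;4;3;2;5]; [:: 0;5;2;1;4;3]; [:: 0;3;2;5;4;1]; [:: 0;1;4;5;2;3]; [:: 0;3;4;1;2;5]].
Definition inner (s v1 v3 v4 v5 : nat) : bool :=
  let v := [:: 0; v1; 1; v3; v4; v5] in
  if (v1 != v3) || (v3 != v5) then
    (if hasS (fun l => p6 (sumN s v l) == 1) cand1
     then hasS (fun l => p6 (sumN s v l) == 12) cand2 else false)
  else true.
Definition chkS (s : nat) : bool :=
  all (fun v1 => all (fun v3 => all (fun v4 => all (fun v5 => inner s v1 v3 v4 v5)
    (iota 0 13)) (iota 0 13)) (iota 0 13)) (iota 0 13).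
Definition cond (s : nat) : bool := (p6 s == 1) && (mm s s != 1) && (mm s (mm s s) != 1).
Definition chk : bool := all (fun s => if cond s then chkS s else true) (iota 0 13).
Lemma chk_ok : chk = true.
Proof. vm_compute. reflexivity. Qed.

Import GRing.Theory.
Local Open Scope ring_scope.

Section Sums.
Variable (F : finFieldType) (m : nat) (a : nat -> F) (s : F).

Definition ysum (sg : 'S_m) : F := \sum_(i < m) a (sg i) * s ^+ i.

Lemma in_perm_sums (sg : 'S_m) : ysum sg \in perm_sums m a s.
Proof. by apply/imsetP; exists sg. Qed.

Lemma ysum_reindex (rho sg : 'S_m) :
  ysum (rho^-1 * sg)%g = \sum_(j < m) a (sg j) * s ^+ (rho j).
Proof.
rewrite /ysum (reindex_inj (@perm_inj _ rho)).
by apply: eq_bigr => j _; rewrite permM permK.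
Qed.

Lemma pos_ord (i : 'I_m) : (0 < m)%N.
Proof. exact: leq_ltn_trans (leq0n _) (ltn_ord i). Qed.

Definition shf (k : nat) (P : pred nat) (i : 'I_m) : 'I_m :=
  if P i then Ordinal (ltn_pmod (i + k)%N (pos_ord i)) else i.

Lemma shf_inj k (P : pred nat) :
  (forall x, P ((x + k) %% m)%N = P x) -> injective (shf k P).
Proof.
move=> HP i j; rewrite /shf.
case Pi: (P i); case Pj: (P j) => E //.
- move/(congr1 val): E => /= /eqP; rewrite eqn_modDr !modn_small //.
  by move=> /eqP; apply: val_inj.
- by move: Pj; rewrite -E /= HP Pi.
- by move: Pi; rewrite E /= HP Pj.
Qed.

Lemma ysum_shf k (P : pred nat) (HP : forall x, P ((x + k) %% m)%N = P x)
  (sm1 : s ^+ m = 1) (sg : 'S_m) :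
  ysum ((perm (@shf_inj k P HP))^-1 * sg)%g =
  \sum_(j < m) a (sg j) * (if P j then s ^+ (j + k)%N else s ^+ j).
Proof.
rewrite ysum_reindex; apply: eq_bigr => j _; rewrite permE /shf.
by case: (P j) => //=; rewrite expr_mod.
Qed.


Lemma ysum_rot (sm1 : s ^+ m = 1) (sg : 'S_m) :
  exists sg' : 'S_m, ysum sg' = s * ysum sg.
Proof.
have HP : forall x, predT ((x + 1) %% m)%N = predT x by [].
exists ((perm (@shf_inj 1 predT HP))^-1 * sg)%g.
rewrite ysum_shf // /ysum mulr_sumr; apply: eq_bigr => j _ /=.
by rewrite addn1 exprS; ring.
Qed.

Lemma rot_closed (sm1 : s ^+ m = 1) (i : nat) (x : F) :
  x \in perm_sums m a s -> s ^+ i * x \in perm_sums m a s.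
Proof.
elim: i => [|i IH]; first by rewrite mul1r.
move=> /IH; rewrite exprS -mulrA => /imsetP [sg _ ->].
have [sg' E] := ysum_rot sm1 sg.
by rewrite -E; apply: in_perm_sums.
Qed.

Lemma final (cardF : #|F| = m.*2.+1) (prs : m.-primitive_root s) :
  (exists sg, ysum sg ^+ m = 1) -> (exists sg, ysum sg ^+ m = -1) ->
  (m.*2 <= #|perm_sums m a s|)%N.
Proof.
move=> [s1 E1] [s2 E2].
have m0 : (0 < m)%N := prim_order_gt0 prs.
have sm1 : s ^+ m = 1 := prim_expr_order prs.
have sub : [set: F] :\ 0 \subset perm_sums m a s.
  apply/subsetP => x; rewrite !inE andbT => x0.
  have xm : (x ^+ m) ^+ 2 = 1.
    apply: (mulfI x0); rewrite mulr1 -exprM -exprS muln2 -cardF.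
    exact: expf_card.
  have [y [yS ym]] : exists y, y \in perm_sums m a s /\ y ^+ m = x ^+ m.
    move/eqP: xm; rewrite sqrf_eq1 => /orP [] /eqP ->.
    - by exists (ysum s1); split => //; apply: in_perm_sums.
    - by exists (ysum s2); split => //; apply: in_perm_sums.
  have y0 : y != 0.
    apply/negP => /eqP y0; move: ym; rewrite y0 expr0n eqn0Ngt m0 /= => /esym/eqP.
    by rewrite expf_eq0 (negbTE x0) andbF.
  have : (x / y) ^+ m = 1.
    by rewrite exprMn exprVn ym mulfV // expf_neq0.
  move/(prim_rootP prs) => [i Ei].
  have -> : x = s ^+ i * y by rewrite -Ei mulfVK.
  exact: rot_closed.
have := subset_leq_card sub.
have := cardsD1 (0 : F) [set: F]; rewrite inE cardsT cardF add1n => -[<-].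
done.
Qed.


Definition psum (P : pred nat) (sg : 'S_m) : F :=
  \sum_(i < m | P i) a (sg i) * s ^+ i.

Lemma ysum_split sg : ysum sg = psum (fun i => ~~ odd i) sg + psum odd sg.
Proof. by rewrite /ysum (bigID (fun i : 'I_m => odd i)) /= addrC. Qed.

Lemma psum_tperm (P : pred nat) sg (p p' : 'I_m) : p != p' -> P p -> P p' ->
  psum P (tperm p p' * sg)%g = psum P sg + (a (sg p') - a (sg p)) * (s ^+ p - s ^+ p').
Proof.
move=> pp' Pp Pp'; rewrite /psum (bigD1 p Pp) (bigD1 p') /=; last by rewrite Pp' eq_sym.
rewrite [in RHS](bigD1 p Pp) [in RHS](bigD1 p') /=; last by rewrite Pp' eq_sym.
rewrite !permM tpermL tpermR.
set R1 := \sum_(i < m | _) _; set R2 := \sum_(i < m | _) _.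
have -> : R1 = R2.
  apply: eq_bigr => i /andP [/andP [_ ip] ip']; rewrite permM tpermD //.
  - by rewrite eq_sym.
  - by rewrite eq_sym.
ring.
Qed.

Lemma psum_tperm_out (Q : pred nat) sg (p p' : 'I_m) : ~~ Q p -> ~~ Q p' ->
  psum Q (tperm p p' * sg)%g = psum Q sg.
Proof.
move=> Qp Qp'; apply: eq_bigr => i Qi; rewrite permM tpermD //.
- by apply: contraNneq Qp => ->.
- by apply: contraNneq Qp' => ->.
Qed.

Lemma family (sm1 : s ^+ m = 1) (meven : ~~ odd m) sg t :
  exists sg' : 'S_m,
    ysum sg' = psum (fun i => ~~ odd i) sg + s ^+ (t.*2) * psum odd sg.
Proof.
have HP : forall x, odd ((x + t.*2) %% m)%N = odd x.
  by move=> x; rewrite odd_mod ?(negbTE meven) // oddD odd_double addbF.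
exists ((perm (@shf_inj t.*2 odd HP))^-1 * sg)%g.
rewrite ysum_shf // (bigID (fun i : 'I_m => odd i)) /= addrC mulr_sumr.
congr (_ + _); apply: eq_bigr => i.
- by move/negbTE => ->.
- by move=> ->; rewrite exprD; ring.
Qed.

End Sums.

Section KAL.
Variable F : fieldType.

Lemma powsum (w : F) n (pw : n.-primitive_root w) l :
  \sum_(t < n) (w ^+ t) ^+ l = if (n %| l)%N then n%:R else 0.
Proof.
under eq_bigr do rewrite exprAC.
case: ifP => nl.
- have -> : w ^+ l = 1 by apply/eqP; rewrite -(prim_order_dvd pw).
  by under eq_bigr do rewrite expr1n; rewrite sumr_const card_ord.
- have wl : w ^+ l - 1 != 0 by rewrite subr_eq0 -(prim_order_dvd pw) nl.
  apply: (mulfI wl); rewrite mulr0 -subrX1 exprAC (prim_expr_order pw) expr1n.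
  by rewrite subrr.
Qed.

Lemma binsum (al be w : F) n k :
  \sum_(t < n) (al + w ^+ t * be) ^+ k =
  \sum_(l < k.+1) (al ^+ (k - l) * be ^+ l *+ 'C(k, l)) * \sum_(t < n) (w ^+ t) ^+ l.
Proof.
under eq_bigr do rewrite exprDn.
rewrite exchange_big /=; apply: eq_bigr => l _; rewrite mulr_sumr.
by apply: eq_bigr => t _; rewrite exprMn; ring.
Qed.

Lemma extract n k (g : nat -> F) : (0 < n)%N -> (k < 3 * n)%N ->
  \sum_(l < k.+1) g l * (if (n %| l)%N then n%:R else 0) =
  n%:R * (g 0%N + (if (n <= k)%N then g n else 0) + (if (n.*2 <= k)%N then g n.*2 else 0)).
Proof.
move=> n0; elim: k => [|k IH] Hk.
  rewrite big_ord1 dvdn0 leqNgt n0 /= leqNgt double_gt0 n0 /=; ring.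
rewrite big_ord_recr /= IH; last by lia.
case: (boolP (n %| k.+1)%N) => [/dvdnP [c Ec]|nd].
- have : (c = 1 \/ c = 2)%N.
    have c0 : (0 < c)%N by case: c Ec.
    have : (c < 3)%N by rewrite -(ltn_pmul2r n0) -Ec.
    by case: c c0 {Ec} => [|[|[|]]] //= _ _; [left|right].
  case=> ?; subst c; rewrite Ec.
  + rewrite mul1n leqnn (leqNgt n k) (_ : (k < n)%N) /=; last by lia.
    rewrite (leqNgt n.*2 k) (_ : (k < n.*2)%N) /=; last by lia.
    rewrite (leqNgt n.*2 n) (_ : (n < n.*2)%N) /=; last by lia.
    ring.
  + have -> : (n <= k)%N = true by lia.
    have -> : (n.*2 <= k)%N = false by lia.
    have -> : (n <= 2 * n)%N = true by lia.
    have -> : (n.*2 <= 2 * n)%N = true by lia.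
    rewrite -mul2n; ring.
- have kn : k.+1 != n by apply: contraNneq nd => ->.
  have kn2 : k.+1 != n.*2 by apply: contraNneq nd => ->; rewrite -mul2n dvdn_mull.
  have e1 : (n <= k.+1)%N = (n <= k)%N by apply/idP/idP; lia.
  have e2 : (n.*2 <= k.+1)%N = (n.*2 <= k)%N by apply/idP/idP; lia.
  rewrite e1 e2; ring.
Qed.



Lemma psum_k (al be w : F) n (pw : n.-primitive_root w) k : (0 < n)%N -> (k < 3 * n)%N ->
  \sum_(t < n) (al + w ^+ t * be) ^+ k =
  n%:R * (al ^+ k + (if (n <= k)%N then al ^+ (k - n) * be ^+ n *+ 'C(k, n) else 0)
    + (if (n.*2 <= k)%N then al ^+ (k - n.*2) * be ^+ n.*2 *+ 'C(k, n.*2) else 0)).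
Proof.
move=> n0 hk; rewrite binsum.
under eq_bigr do rewrite (@powsum w n pw).
rewrite (extract _ _ (fun l => al ^+ (k - l) * be ^+ l *+ 'C(k, l))) //.
by rewrite subn0 expr0 mulr1 bin0 mulr1n.
Qed.

Lemma KAL n (w al be eps : F) : (2 < n)%N -> n.-primitive_root w -> al != 0 -> be != 0 ->
  (4 * n + 1)%:R = 0 :> F -> (eps = 1 \/ eps = -1) ->
  al ^+ (4 * n) = 1 -> be ^+ (4 * n) = 1 ->
  (forall t, (t < n)%N -> (al + w ^+ t * be) ^+ n.*2 = eps \/ al + w ^+ t * be = 0) ->
  3%:R = 0 :> F \/ 13%:R = 0 :> F \/ 19%:R = 0 :> F.
Proof.
move=> n2 pw al0 be0 q0 heps a4 b4 H.
have n0 : (0 < n)%N by lia.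
have n0F : n%:R != 0 :> F.
  apply/eqP => h; move: q0.
  have -> : (4 * n + 1)%:R = 4%:R * n%:R + 1 :> F by ring.
  by rewrite h mulr0 add0r; apply/eqP; rewrite oner_eq0.
have n20F : (n.*2)%:R != 0 :> F.
  apply/eqP => h; move: q0.
  have -> : (4 * n + 1)%:R = 2%:R * (n.*2)%:R + 1 :> F.
    by rewrite -muln2; ring.
  by rewrite h mulr0 add0r; apply/eqP; rewrite oner_eq0.
have Ej : forall j, (0 < j < n)%N ->
    \sum_(t < n) ((al + w ^+ t * be) ^+ (n.*2 + j) - eps * (al + w ^+ t * be) ^+ j) = 0.
  move=> j hj; apply: big1 => t _; case: (H t (ltn_ord t)) => E.
  - by rewrite exprD E; ring.
  - have h1 : (n.*2 + j == 0)%N = false by lia.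
    have h2 : (j == 0)%N = false by lia.
    by rewrite E !expr0n h1 h2 /=; ring.
have key : forall j, (0 < j < n)%N ->
    al ^+ n.*2 - eps + al ^+ n * be ^+ n * ('C(n.*2 + j, n))%:R
      + be ^+ n.*2 * ('C(n.*2 + j, n.*2))%:R = 0.
  move=> j hj; have := Ej j hj; rewrite sumrB -mulr_sumr !(@psum_k al be w n pw) //; try lia.
  have -> : (n <= n.*2 + j)%N = true by lia.
  have -> : (n.*2 <= n.*2 + j)%N = true by lia.
  have -> : (n <= j)%N = false by lia.
  have -> : (n.*2 <= j)%N = false by lia.
  have -> : (n.*2 + j - n = n + j)%N by lia.
  have -> : (n.*2 + j - n.*2 = j)%N by lia.
  rewrite !exprD => E.
  have nz : n%:R * al ^+ j != 0 by rewrite mulf_neq0 // expf_neq0.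
  apply: (mulfI nz); rewrite mulr0 -[RHS]E; ring.
set A2 := al ^+ n.*2; set Y := be ^+ n.*2; set X := al ^+ n * be ^+ n.
have E1 := key 1%N ltac:(lia).
have E2 := key 2%N ltac:(lia).
set c1 := 'C(n.*2 + 1, n) in E1; set c2 := 'C(n.*2 + 2, n) in E2.
set d1 := 'C(n.*2 + 1, n.*2) in E1; set d2 := 'C(n.*2 + 2, n.*2) in E2.
have hc : ((n + 2) * c2 = (n.*2 + 2) * c1)%N.
  have := mul_bin_down (n.*2 + 2) n.
  rewrite (_ : (n.*2 + 2).-1 = n.*2 + 1)%N; last by lia.
  rewrite (_ : (n.*2 + 2 - n = n + 2)%N); last by lia.
  by move=> ->.
have hd1 : d1 = (n.*2 + 1)%N by rewrite /d1 addn1 binSn.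
have hd : (2 * d2 = (n.*2 + 2) * (n.*2 + 1))%N.
  have := mul_bin_down (n.*2 + 2) n.*2.
  rewrite (_ : (n.*2 + 2).-1 = (n.*2).+1)%N; last by lia.
  rewrite binSn (_ : (n.*2 + 2 - n.*2 = 2)%N); last by lia.
  by rewrite addn1 => ->.
have hcF : (n + 2)%:R * c2%:R - (n.*2 + 2)%:R * c1%:R = 0 :> F.
  by rewrite -!natrM hc subrr.
have hdF : 2%:R * d2%:R - (n.*2 + 2)%:R * (n.*2 + 1)%:R = 0 :> F.
  by rewrite -!natrM hd subrr.
have G : (n.*2)%:R * (A2 - eps - ((n + 1) * (n.*2 + 1))%:R * Y) = 0.
  have -> : (n.*2)%:R * (A2 - eps - ((n + 1) * (n.*2 + 1))%:R * Y) =
    (2 * (n.*2 + 2))%:R * (A2 - eps + X * c1%:R + Y * d1%:R)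
    - (2 * (n + 2))%:R * (A2 - eps + X * c2%:R + Y * d2%:R)
    + 2%:R * X * ((n + 2)%:R * c2%:R - (n.*2 + 2)%:R * c1%:R)
    + (n + 2)%:R * Y * (2%:R * d2%:R - (n.*2 + 2)%:R * (n.*2 + 1)%:R).
    rewrite hd1 -!muln2; ring.
  by rewrite E1 E2 hcF hdF; ring.
move/eqP: G; rewrite mulf_eq0 (negbTE n20F) /= subr_eq0 => /eqP G.
have h8 : 8%:R * (A2 - eps) = 3%:R * Y.
  rewrite G mulrA -natrM.
  have -> : (8 * ((n + 1) * (n.*2 + 1)))%N = (3 + (4 * n + 1) * (4 * n + 5))%N.
    rewrite -muln2; ring.
  by rewrite natrD natrM q0 mul0r addr0.
have sq1 : forall z : F, z ^+ (4 * n) = 1 -> (z ^+ n.*2 = 1) \/ (z ^+ n.*2 = -1).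
  move=> z hz; have : (z ^+ n.*2) ^+ 2 == 1 by rewrite -exprM -muln2 -mulnA mulnC hz.
  by rewrite sqrf_eq1 => /orP [] /eqP; [left|right].
have [hA|hA] := sq1 _ a4; have [hY|hY] := sq1 _ b4; rewrite /A2 /Y hA hY in h8;
  case: heps => he; rewrite he in h8.
- left; have e : (3%:R : F) = 3%:R * 1 - 8%:R * (1 - 1) by ring.
  by rewrite e -h8 subrr.
- right; left; have e : (13%:R : F) = 8%:R * (1 - -1) - 3%:R * 1 by ring.
  by rewrite e h8 subrr.
- left; have e : (3%:R : F) = - (3%:R * -1 - 8%:R * (1 - 1)) by ring.
  by rewrite e -h8 subrr oppr0.
- right; right; have e : (19%:R : F) = 8%:R * (1 - -1) - 3%:R * -1 by ring.
  by rewrite e h8 subrr.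
- right; right; have e : (19%:R : F) = 3%:R * 1 - 8%:R * (-1 - 1) by ring.
  by rewrite e -h8 subrr.
- left; have e : (3%:R : F) = 3%:R * 1 - 8%:R * (-1 - -1) by ring.
  by rewrite e -h8 subrr.
- right; left; have e : (13%:R : F) = 3%:R * -1 - 8%:R * (-1 - 1) by ring.
  by rewrite e -h8 subrr.
- left; have e : (3%:R : F) = - (3%:R * -1 - 8%:R * (-1 - -1)) by ring.
  by rewrite e -h8 subrr oppr0.
Qed.

End KAL.

Notation F13 := ('F_13).

Lemma natr13 (x : F13) : (val x)%:R = x.
Proof. exact: natr_Zp. Qed.

Lemma natr_mod13 k : (k %% 13)%:R = k%:R :> F13.
Proof. by apply: Fp_nat_mod. Qed.

Lemma mm_ok x y : (x < 13)%N -> (y < 13)%N -> mm x y = ((x * y) %% 13)%N.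
Proof.
move=> hx hy.
have : all (fun x => all (fun y => mm x y == ((x * y) %% 13)%N) (iota 0 13)) (iota 0 13).
  by vm_compute.
move/allP => H; have /allP H2 := H x ltac:(by rewrite mem_iota).
by apply/eqP; apply: H2; rewrite mem_iota.
Qed.

Lemma am_ok x y : (x < 13)%N -> (y < 13)%N -> am x y = ((x + y) %% 13)%N.
Proof.
move=> hx hy.
have : all (fun x => all (fun y => am x y == ((x + y) %% 13)%N) (iota 0 13)) (iota 0 13).
  by vm_compute.
move/allP => H; have /allP H2 := H x ltac:(by rewrite mem_iota).
by apply/eqP; apply: H2; rewrite mem_iota.
Qed.

Lemma mmR x y : (x < 13)%N -> (y < 13)%N -> (mm x y)%:R = x%:R * y%:R :> F13.
Proof. by move=> hx hy; rewrite mm_ok // natr_mod13 natrM. Qed.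
Lemma amR x y : (x < 13)%N -> (y < 13)%N -> (am x y)%:R = x%:R + y%:R :> F13.
Proof. by move=> hx hy; rewrite am_ok // natr_mod13 natrD. Qed.
Lemma mm_lt x y : (x < 13)%N -> (y < 13)%N -> (mm x y < 13)%N.
Proof. by move=> hx hy; rewrite mm_ok // ltn_mod. Qed.
Lemma am_lt x y : (x < 13)%N -> (y < 13)%N -> (am x y < 13)%N.
Proof. by move=> hx hy; rewrite am_ok // ltn_mod. Qed.

Lemma p6R y : (y < 13)%N -> (p6 y)%:R = (y%:R) ^+ 6 :> F13.
Proof.
move=> hy; rewrite /p6 !mmR ?mm_lt //; ring.
Qed.

Lemma sumN_lt s v l : (s < 13)%N -> all (fun x => x < 13)%N v -> (sumN s v l < 13)%N.
Proof.
move=> hs hv; elim: l => [|p l IH] //=.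
apply: am_lt; last exact: mm_lt.
case: (ltnP p (size v)) => hp; first by apply: (allP hv); apply: mem_nth.
by rewrite nth_default.
Qed.

Lemma sumNR s v l : (s < 13)%N -> all (fun x => x < 13)%N v ->
  (sumN s v l)%:R = \sum_(k < size l) (nth 0 v (nth 0 l k))%:R * (s%:R) ^+ k :> F13.
Proof.
move=> hs hv; elim: l => [|p l IH]; first by rewrite big_ord0.
have hnv : forall p, (nth 0 v p < 13)%N.
  move=> p'; case: (ltnP p' (size v)) => hp; first by apply: (allP hv); apply: mem_nth.
  by rewrite nth_default.
rewrite /= amR // ?mmR ?sumN_lt ?mm_lt //.
rewrite big_ord_recl /= IH expr0 mulr1 mulr_sumr; congr (_ + _).
- by apply: eq_bigr => k _; rewrite exprS; ring.
- exact: sumN_lt.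
Qed.
Arguments mmR {x y}.
Arguments amR {x y}.
Arguments mm_lt {x y}.
Arguments am_lt {x y}.

Lemma val_natr13 x : val (x%:R : F13) = (x %% 13)%N.
Proof. by rewrite Zp_nat. Qed.

Lemma natr13_inj x y : (x < 13)%N -> (y < 13)%N -> x%:R = y%:R :> F13 -> x = y.
Proof. by move=> hx hy /(congr1 val); rewrite !val_natr13 !modn_small. Qed.

Lemma perm_of_list (l : seq nat) : uniq l -> size l = 6%N -> all (fun x => x < 6)%N l ->
  exists sg : 'S_6, forall i : 'I_6, (sg i : nat) = nth 0 l i.
Proof.
move=> ul sl al.
have hl : forall i : 'I_6, (nth 0 l i < 6)%N.
  by move=> i; apply: (allP al); apply: mem_nth; rewrite sl.
have finj : injective (fun i : 'I_6 => (inord (nth 0 l i) : 'I_6)).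
  move=> i j /(congr1 (@nat_of_ord 6)); rewrite !inordK // => /eqP.
  by rewrite nth_uniq ?sl // => /eqP /val_inj.
exists (perm finj) => i; by rewrite permE inordK.
Qed.

Lemma hasS_has f L : hasS f L = has f L.
Proof. by elim: L => //= l L ->; case: (f l). Qed.

Lemma chk_use (s0 v1 v3 v4 v5 : nat) :
  (s0 < 13)%N -> (v1 < 13)%N -> (v3 < 13)%N -> (v4 < 13)%N -> (v5 < 13)%N ->
  p6 s0 = 1%N -> mm s0 s0 != 1%N -> mm s0 (mm s0 s0) != 1%N -> (v1 != v3) || (v3 != v5) ->
  (exists2 l, l \in cand1 & p6 (sumN s0 [:: 0; v1; 1; v3; v4; v5]%N l) = 1%N) /\
  (exists2 l, l \in cand2 & p6 (sumN s0 [:: 0; v1; 1; v3; v4; v5]%N l) = 12%N).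
Proof.
move=> hs h1 h3 h4 h5 c1 c2 c3 cv.
have iot : forall x, (x < 13)%N -> x \in iota 0 13.
  by move=> x hx; rewrite mem_iota leq0n add0n hx.
have := chk_ok; rewrite /chk => /allP /(_ s0 (iot _ hs)).
have -> : cond s0 = true by rewrite /cond c1 eqxx c2 c3.
rewrite /chkS.
move=> /allP /(_ v1 (iot _ h1)).
move=> /allP /(_ v3 (iot _ h3)).
move=> /allP /(_ v4 (iot _ h4)).
move=> /allP /(_ v5 (iot _ h5)).
rewrite /inner cv !hasS_has.
case: ifP => // /hasP [l1 l1in /eqP e1] /hasP [l2 l2in /eqP e2].
by split; [exists l1 | exists l2].
Qed.

Lemma cands_ok : all (fun l => uniq l && (size l == 6%N) && all (fun x => x < 6)%N l) (cand1 ++ cand2).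
Proof. by vm_compute. Qed.

Lemma fermat13 (x : F13) : x != 0 -> x ^+ 12 = 1.
Proof.
move=> x0; apply: (mulfI x0); rewrite mulr1 -exprS.
have := expf_card x; rewrite card_Fp //.
Qed.

Lemma q13 (s : F13) (a : nat -> F13) :
  6.-primitive_root s ->
  (exists i j : nat, [/\ (i < 6)%N, (j < 6)%N, ~~ odd i, ~~ odd j & a i != a j]) ->
  (exists i j : nat, [/\ (i < 6)%N, (j < 6)%N, odd i, odd j & a i != a j]) ->
  (exists sg : 'S_6, @ysum F13 6 a s sg ^+ 6 = 1) /\ (exists sg : 'S_6, @ysum F13 6 a s sg ^+ 6 = -1).
Proof.
move=> prs [i0 [j0 [hi0 hj0 ei0 ej0 ne0]]] [i1 [j1 [hi1 hj1 oi1 oj1 ne1]]].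
have s6 : s ^+ 6 = 1 := prim_expr_order prs.
have sk : forall k, (0 < k < 6)%N -> s ^+ k != 1.
  move=> k hk; rewrite -(prim_order_dvd prs); apply/negP => /dvdn_leq; lia.
have s1 : s != 1 by have := sk 1%N erefl; rewrite expr1.
have sum0 : \sum_(i < 6) s ^+ i = 0.
  have := subrX1 s 6; rewrite s6 subrr => /esym/eqP.
  by rewrite mulf_eq0 subr_eq0 (negbTE s1) /= => /eqP.
have ev : a 2 != a 0 \/ a 4 != a 0.
  case: (eqVneq (a 2) (a 0)) => e2; last by left.
  case: (eqVneq (a 4) (a 0)) => e4; last by right.
  have H : forall i, (i < 6)%N -> ~~ odd i -> a i = a 0.
    by move=> [|[|[|[|[|[|i]]]]]].
  by move: ne0; rewrite (H i0) // (H j0) // eqxx.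
pose pi : 'S_6 := if a 2 != a 0 then 1%g else tperm (inord 2) (inord 4).
have piodd : forall k : 'I_6, odd k -> pi k = k.
  move=> k ok; rewrite /pi; case: ifP => _; first by rewrite perm1.
  rewrite tpermD //; apply/eqP => /(congr1 (@nat_of_ord 6)); rewrite inordK //.
  - by move=> e; move: ok; rewrite -e.
  - by move=> e; move: ok; rewrite -e.
have pi0 : pi (inord 0) = inord 0.
  rewrite /pi; case: ifP => _; first by rewrite perm1.
  by rewrite tpermD //; apply/eqP => /(congr1 (@nat_of_ord 6)); rewrite !inordK.
pose a2 := fun k : nat => a (pi (inord k)).
have a2ev : a2 2%N != a2 0%N.
  rewrite /a2 pi0 inordK //; rewrite /pi; case: ifP => h.
  - by rewrite perm1 inordK.
  - by rewrite tpermL inordK //; case: ev => //; rewrite h.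
have ys2 : forall sg : 'S_6, @ysum F13 6 a2 s sg = @ysum F13 6 a s (sg * pi)%g.
  by move=> sg; apply: eq_bigr => i _; rewrite /a2 inord_val permM.
pose c := a2 0%N; pose lam := (a2 2%N - c)^-1.
have lam0 : lam != 0 by rewrite invr_eq0 subr_eq0.
pose a' := fun k : nat => lam * (a2 k - c).
have ys' : forall sg : 'S_6, @ysum F13 6 a' s sg = lam * @ysum F13 6 a2 s sg.
  move=> sg; rewrite /ysum mulr_sumr.
  have -> : \sum_(i < 6) a' (sg i) * s ^+ i =
     \sum_(i < 6) lam * (a2 (sg i) * s ^+ i) - lam * c * \sum_(i < 6) s ^+ i.
    rewrite mulr_sumr -sumrB; apply: eq_bigr => i _; rewrite /a'; ring.
  by rewrite sum0 mulr0 subr0.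
have a'0 : a' 0%N = 0 by rewrite /a' /c subrr mulr0.
have a'2 : a' 2%N = 1 by rewrite /a' /lam mulVf // subr_eq0.
pose vl : seq nat := [:: 0; val (a' 1%N); 1; val (a' 3%N); val (a' 4%N); val (a' 5%N)]%N.
have vlE : forall k, (k < 6)%N -> (nth 0 vl k)%:R = a' k.
  move=> [|[|[|[|[|[|k]]]]]] // _;
    first [exact: natr13 | exact: (esym a'0) | exact: (esym a'2) | idtac].
have lt13 : forall x : F13, (val x < 13)%N := fun x => ltn_ord x.
have vlt : all (fun x => x < 13)%N vl.
  have gen : forall x1 x3 x4 x5 : F13,
      all (fun x => x < 13)%N [:: 0; val x1; 1; val x3; val x4; val x5]%N.
    by move=> x1 x3 x4 x5; rewrite /= !lt13.
  exact: gen.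
have s0lt : (val s < 13)%N := lt13 s.
have ysL : forall l (sg : 'S_6), size l = 6%N -> all (fun x => x < 6)%N l ->
    (forall i : 'I_6, (sg i : nat) = nth 0 l i) ->
    @ysum F13 6 a' s sg = (sumN (val s) vl l)%:R.
  move=> l sg sl al hsg; rewrite sumNR // natr13.
  rewrite sl /ysum; apply: eq_bigr => k _; rewrite -hsg vlE //.
have p6lt : forall y, (y < 13)%N -> (p6 y < 13)%N.
  by move=> y hy; have h2 := mm_lt hy hy; exact: mm_lt h2 (mm_lt h2 h2).
have c1 : p6 (val s) = 1%N.
  apply: natr13_inj; [exact: p6lt | by [] |].
  by rewrite p6R // natr13 s6.
have c2 : mm (val s) (val s) != 1%N.
  apply/negP => /eqP h; have := mmR s0lt s0lt; rewrite h natr13 -expr2 => /esym/eqP.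
  by apply/negP; apply: sk.
have c3 : mm (val s) (mm (val s) (val s)) != 1%N.
  apply/negP => /eqP h; have := mmR s0lt (mm_lt s0lt s0lt).
  rewrite h mmR // natr13 => /esym/eqP; rewrite (_ : s * (s * s) = s ^+ 3); last by ring.
  by apply/negP; apply: sk.
have oddeq : forall k, (k < 6)%N -> odd k -> a2 k = a k.
  move=> k hk ok; rewrite /a2 piodd; last by rewrite inordK.
  by rewrite inordK.
have cv : (val (a' 1%N) != val (a' 3%N)) || (val (a' 3%N) != val (a' 5%N)).
  case: (boolP (val (a' 1%N) != val (a' 3%N))) => // /negPn/eqP e13.
  apply/orP; right; apply/negP => /eqP e35.
  have e : forall k, a' k = lam * (a k - c) -> a' k = a' 1%N -> a k = a 1%N.
    move=> k -> ; rewrite /a' (oddeq 1%N) // => /(mulfI lam0) /addIr //.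
  have H : forall i, (i < 6)%N -> odd i -> a i = a 1%N.
    move=> [|[|[|[|[|[|i]]]]]] // _ _.
    - apply: e; first by rewrite /a' oddeq.
      by apply: val_inj; rewrite e13.
    - apply: e; first by rewrite /a' oddeq.
      by apply: val_inj; rewrite -e35 e13.
  by move: ne1; rewrite (H i1) // (H j1) // eqxx.
have [[l1 l1in e1] [l2 l2in e2]] :=
  @chk_use (val s) (val (a' 1%N)) (val (a' 3%N)) (val (a' 4%N)) (val (a' 5%N)) s0lt (lt13 _) (lt13 _) (lt13 _) (lt13 _) c1 c2 c3 cv.
have cprop : forall l, l \in cand1 ++ cand2 ->
    exists sg : 'S_6, @ysum F13 6 a' s sg = (sumN (val s) vl l)%:R.
  move=> l lin; have := allP cands_ok l lin => /andP [/andP [ul /eqP sl] al].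
  have [sg hsg] := @perm_of_list l ul sl al.
  by exists sg; apply: ysL.
have [sg1 E1] := cprop l1 ltac:(by rewrite mem_cat l1in).
have [sg2 E2] := cprop l2 ltac:(by rewrite mem_cat l2in orbT).
have Y1 : @ysum F13 6 a' s sg1 ^+ 6 = 1.
  by rewrite E1 -p6R ?sumN_lt // e1.
have Y2 : @ysum F13 6 a' s sg2 ^+ 6 = -1.
  by rewrite E2 -p6R ?sumN_lt // e2; apply/val_inj.
have back : forall sg : 'S_6,
    @ysum F13 6 a s (sg * pi)%g = lam^-1 * @ysum F13 6 a' s sg.
  by move=> sg; rewrite ys' ys2 mulrA mulVf // mul1r.
have lami0 : lam^-1 != 0 by rewrite invr_eq0.
have u2 : (lam^-1 ^+ 6) ^+ 2 == 1 by rewrite -exprM fermat13.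
move: u2; rewrite sqrf_eq1 => /orP [] /eqP hu.
- split; [exists (sg1 * pi)%g | exists (sg2 * pi)%g];
    by rewrite back exprMn hu ?Y1 ?Y2 mul1r.
- split; [exists (sg2 * pi)%g | exists (sg1 * pi)%g];
    rewrite back exprMn hu ?Y1 ?Y2; ring.
Qed.

Lemma exist_ab (F : finFieldType) (m : nat) (a : nat -> F) (s : F)
  (prs : m.-primitive_root s) (i0 j0 i1 j1 : nat) :
  (i0 < m)%N -> (j0 < m)%N -> ~~ odd i0 -> ~~ odd j0 -> a i0 != a j0 ->
  (i1 < m)%N -> (j1 < m)%N -> odd i1 -> odd j1 -> a i1 != a j1 ->
  exists sg : 'S_m, psum F m a s (fun i => ~~ odd i) sg != 0 /\ psum F m a s odd sg != 0.
Proof.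
move=> hi0 hj0 ei0 ej0 ne0 hi1 hj1 oi1 oj1 ne1.
pose o0 := Ordinal hi0; pose p0 := Ordinal hj0.
pose o1 := Ordinal hi1; pose p1 := Ordinal hj1.
have neq : forall i j : 'I_m, a i != a j -> (a j - a i) * (s ^+ i - s ^+ j) != 0.
  move=> i j h; rewrite mulf_neq0 //; first by rewrite subr_eq0 eq_sym.
  rewrite subr_eq0 (eq_prim_root_expr prs) !modn_small //.
  by apply: contra h => /eqP /val_inj ->.
have op0 : o0 != p0 by apply: contra ne0 => /eqP [->].
have op1 : o1 != p1 by apply: contra ne1 => /eqP [->].
have [se [hse1 hse2]] : exists se : 'S_m,
    psum F m a s (fun i => ~~ odd i) se != 0 /\ (forall i : 'I_m, odd i -> se i = i).
  case: (eqVneq (psum F m a s (fun i => ~~ odd i) 1%g) 0) => h.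
  - exists (tperm o0 p0 * 1)%g; split.
    + by rewrite psum_tperm // h add0r !perm1; apply: neq.
    + move=> i oi; rewrite permM perm1 tpermD //.
      * by apply: contraTneq oi => <-.
      * by apply: contraTneq oi => <-.
  - by exists 1%g; split => // i _; rewrite perm1.
case: (eqVneq (psum F m a s odd se) 0) => h.
- exists (tperm o1 p1 * se)%g; split.
  + by rewrite psum_tperm_out ?negbK.
  + by rewrite psum_tperm // h add0r !hse2 //; apply: neq.
- by exists se.
Qed.

Lemma fermatq (q : nat) (x : 'F_q) : prime q -> x != 0 -> x ^+ q.-1 = 1.
Proof.
move=> pq x0; apply: (mulfI x0); rewrite mulr1 -exprS prednK ?prime_gt0 //.
by have := expf_card x; rewrite card_Fp.
Qed.

Lemma aux_e4 n : (n.*2 * 2 = 4 * n)%N. Proof. lia. Qed.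
Lemma aux_c3 q n : q = (4 * n + 1)%N -> (2 < n)%N -> (q <= 3)%N -> False. Proof. lia. Qed.
Lemma aux_c13 q n : q = (4 * n + 1)%N -> (2 < n)%N -> (q <= 13)%N -> q = 13%N. Proof. lia. Qed.
Lemma aux_c19 q n : q = (4 * n + 1)%N -> (2 < n)%N -> (q <= 19)%N -> (n = 3 \/ n = 4)%N. Proof. lia. Qed.

Lemma main_gen (q n : nat) (s : 'F_q) (a : nat -> 'F_q) :
  prime q -> q = (4 * n + 1)%N -> (2 < n)%N -> q != 13%N ->
  (n.*2).-primitive_root s ->
  (exists i j : nat, [/\ (i < n.*2)%N, (j < n.*2)%N, ~~ odd i, ~~ odd j & a i != a j]) ->
  (exists i j : nat, [/\ (i < n.*2)%N, (j < n.*2)%N, odd i, odd j & a i != a j]) ->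
  forall c : 'F_q, c = 1 \/ c = -1 ->
  exists sg : 'S_(n.*2), ysum 'F_q (n.*2) a s sg ^+ (n.*2) = c.
Proof.
move=> pq hq n2 q13 prs [i0 [j0 [hi0 hj0 ei0 ej0 ne0]]] [i1 [j1 [hi1 hj1 oi1 oj1 ne1]]] c hc.
case: (boolP [exists sg : 'S_(n.*2), ysum 'F_q (n.*2) a s sg ^+ (n.*2) == c]).
  by move=> /existsP [sg /eqP h]; exists sg.
rewrite negb_exists => /forallP H; exfalso.
have [sg [al0 be0]] := @exist_ab _ _ a s prs _ _ _ _ hi0 hj0 ei0 ej0 ne0 hi1 hj1 oi1 oj1 ne1.
set al := psum _ _ _ _ _ sg in al0; set be := psum _ _ _ _ _ sg in be0.
have sm1 : s ^+ n.*2 = 1 := prim_expr_order prs.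
have meven : ~~ odd n.*2 by rewrite odd_double.
have pw : n.-primitive_root (s ^+ 2).
  have := exp_prim_root prs 2.
  by rewrite -muln2 gcdnMl mulnK.
have ferm : forall x : 'F_q, x != 0 -> x ^+ (4 * n) = 1.
  by move=> x x0; rewrite (_ : (4 * n = q.-1)%N) ?(@fermatq q x pq x0) // hq addn1.
have q0 : (4 * n + 1)%:R = 0 :> 'F_q by rewrite -hq pchar_Fp_0.
have heps : - c = 1 \/ - c = -1.
  by case: hc => ->; [right | left; rewrite opprK].
have fam : forall t, (t < n)%N ->
    (al + (s ^+ 2) ^+ t * be) ^+ n.*2 = - c \/ al + (s ^+ 2) ^+ t * be = 0.
  move=> t _; have [sg' E] := @family _ _ a s sm1 meven sg t.
  have -> : (s ^+ 2) ^+ t = s ^+ t.*2 by rewrite -exprM mulnC muln2.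
  rewrite -E; set y := ysum _ _ _ _ _.
  case: (eqVneq y 0) => y0; [by right | left].
  have : (y ^+ n.*2) ^+ 2 == 1.
    have e4 := aux_e4 n.
    by rewrite -exprM e4 ferm.
  rewrite sqrf_eq1 => /orP [] /eqP e; move: (H sg'); rewrite -/y e;
    case: hc => -> //; rewrite ?eqxx // => _; rewrite ?opprK //.
have := @KAL _ n _ al be (- c) n2 pw al0 be0 q0 heps (ferm _ al0) (ferm _ be0) fam.
have dv : forall k, (k%:R : 'F_q) = 0 -> (q %| k)%N.
  by move=> k hk; rewrite (dvdn_pcharf (pchar_Fp pq)) hk.
case=> [/dv|[/dv|/dv]] hd; have hle := dvdn_leq (ltn0Sn _) hd.
- exact: (aux_c3 _ _ hq n2 hle).
- by move: q13; rewrite (aux_c13 _ _ hq n2 hle).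
- have := aux_c19 _ _ hq n2 hle.
  by case=> ?; subst n; subst q; move: hd q13.
Qed.

Theorem corollary2 (q : nat) (s : 'F_q) (a : nat -> 'F_q) :
  prime q -> (q %% 4 = 1)%N -> (13 <= q)%N ->
  ((q - 1) %/ 2).-primitive_root s ->
  (exists i j : nat, [/\ (i < (q - 1) %/ 2)%N, (j < (q - 1) %/ 2)%N,
       ~~ odd i, ~~ odd j & a i != a j]) ->
  (exists i j : nat, [/\ (i < (q - 1) %/ 2)%N, (j < (q - 1) %/ 2)%N,
       odd i, odd j & a i != a j]) ->
  (q - 1 <= #|perm_sums ((q - 1) %/ 2) a s|)%N.
Proof.
move=> pq q4 q13le prs ev od.
have [n hq] : exists n, q = (4 * n + 1)%N by exists (q %/ 4)%N; lia.
have hm : ((q - 1) %/ 2 = n.*2)%N by rewrite hq; lia.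
rewrite hm in prs ev od *.
have n2 : (2 < n)%N by lia.
have cardF : #|'F_q| = (n.*2).*2.+1 by rewrite card_Fp // hq; lia.
rewrite (_ : (q - 1 = (n.*2).*2)%N); last by lia.
apply: (@final _ _ a s cardF prs).
- case: (eqVneq q 13%N) => [e13|ne13].
  + have n3 : (n = 3)%N by lia.
    subst n; subst q.
    by have [h1 h2] := @q13 s a prs ev od.
  + by apply: (@main_gen q n s a pq hq n2 ne13 prs ev od); left.
- case: (eqVneq q 13%N) => [e13|ne13].
  + have n3 : (n = 3)%N by lia.
    subst n; subst q.
    by have [h1 h2] := @q13 s a prs ev od.
  + by apply: (@main_gen q n s a pq hq n2 ne13 prs ev od); right.
Qed.
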